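(* Let $g:\mathbb{R}\to\mathbb{R}$ be $\pi$-periodic. Let $m,n$ be positive integers, $p=\gcd(m,n)$, and $r,q$ positive integers with $m=pq$, $n=pr$. Let $\mu=\pi/n$ and define $h(x)=\prod_{j=0}^{r-1} g(x+jm\mu)$. Then for all $x\in\mathbb{R}$, $$\prod_{k=1}^{p} h\big(x+(k-1)\mu\big)=\prod_{i=0}^{n-1} g(x+i\mu)\quad\text{and}\quad \prod_{i=0}^{n-1} g(x+mi\mu)=h(x)^p.$$ *)

(* Defs.v *)
From Stdlib Require Import Reals Arith PeanoNat.
Open Scope R_scope.

Fixpoint prod_R (f : nat -> R) (n : nat) : R :=
  match n with
  | O => 1
  | S k => prod_R f k * f k
  end.

(* Main.v *)
Require Import Defs.
From Stdlib Require Import Reals Arith PeanoNat.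
From Stdlib Require Import List Permutation Lia Lra.
Open Scope R_scope.

Definition prodL (F : nat -> R) (l : list nat) : R :=
  fold_right (fun a acc => F a * acc) 1 l.

Lemma prodL_app F l1 l2 : prodL F (l1 ++ l2) = prodL F l1 * prodL F l2.
Proof. induction l1; simpl; [ring| rewrite IHl1; ring]. Qed.

Lemma prodL_map F f l : prodL F (map f l) = prodL (fun a => F (f a)) l.
Proof. induction l; simpl; congruence. Qed.

Lemma prodL_perm F l l' : Permutation l l' -> prodL F l = prodL F l'.
Proof. induction 1; simpl; try congruence; ring. Qed.

Lemma prod_R_L F n : prod_R F n = prodL F (seq 0 n).
Proof.
  induction n; [reflexivity|].
  cbn [prod_R]. rewrite seq_S, prodL_app, IHn; simpl; ring.
Qed.

Lemma prod_R_ext F G n : (forall i, (i < n)%nat -> F i = G i) -> prod_R F n = prod_R G n.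
Proof. induction n; intros H; simpl; [reflexivity|]. rewrite IHn, H; auto. Qed.

Lemma prod_R_mul F G n : prod_R (fun i => F i * G i) n = prod_R F n * prod_R G n.
Proof. induction n; simpl; [ring|rewrite IHn; ring]. Qed.

Lemma prod_R_add F a b : prod_R F (a + b) = prod_R F a * prod_R (fun i => F (a + i)%nat) b.
Proof.
  induction b; simpl.
  - rewrite Nat.add_0_r; ring.
  - rewrite Nat.add_succ_r; simpl; rewrite IHb; ring.
Qed.

Lemma prod_R_pow F n p : prod_R (fun i => F i ^ p) n = prod_R F n ^ p.
Proof. induction n; simpl; [rewrite pow1; ring|rewrite IHn, Rpow_mult_distr; ring]. Qed.

Lemma prod_R_const c p : prod_R (fun _ => c) p = c ^ p.
Proof. induction p; simpl; [ring| rewrite IHp; ring]. Qed.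

Lemma swap_lemma G a b :
  prod_R (fun k => prod_R (fun j => G (k + a * j)%nat) b) a = prod_R G (a * b).
Proof.
  induction b.
  - rewrite Nat.mul_0_r; simpl. apply prod_R_const with (c:=1) (p:=a) || (rewrite prod_R_const, pow1; reflexivity).
  - rewrite Nat.mul_succ_r, prod_R_add, <- IHb.
    simpl. rewrite prod_R_mul. f_equal.
    apply prod_R_ext; intros i _; f_equal; lia.
Qed.

Lemma mod_inj q r a b : Nat.gcd q r = 1%nat -> (a < r)%nat -> (b < r)%nat ->
  (a * q) mod r = (b * q) mod r -> a = b.
Proof.
  intros Hg Ha Hb Heq.
  assert (Hr : r <> 0%nat) by lia.
  assert (Hg' : Nat.gcd r q = 1%nat) by (rewrite Nat.gcd_comm; auto).
  assert (key : forall x y, (x <= y)%nat -> (y < r)%nat -> (x * q) mod r = (y * q) mod r -> x = y).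
  { intros x y Hxy Hy E.
    pose proof (Nat.div_mod_eq (x*q) r) as E1.
    pose proof (Nat.div_mod_eq (y*q) r) as E2.
    assert (D : Nat.divide r (q * (y - x))).
    { exists ((y*q)/r - (x*q)/r)%nat.
      rewrite Nat.mul_sub_distr_l, Nat.mul_sub_distr_r.
      assert (x * q <= y * q)%nat by (apply Nat.mul_le_mono_r; auto).
      rewrite (Nat.mul_comm q y), (Nat.mul_comm q x).
      rewrite E in E1. revert E1 E2 H. generalize (x*q/r)%nat (y*q/r)%nat ((y*q) mod r)%nat. intros; nia. }
    destruct (Nat.gauss _ _ _ D Hg') as [s Hs]. destruct s; simpl in Hs; lia. }
  destruct (Nat.le_ge_cases a b); [apply key|symmetry; apply key]; auto.
Qed.

Lemma perm_lemma F q r : Nat.gcd q r = 1%nat -> (0 < r)%nat ->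
  prod_R (fun j => F ((j * q) mod r)%nat) r = prod_R F r.
Proof.
  intros Hg Hr.
  rewrite !prod_R_L, <- (prodL_map F (fun j => (j * q) mod r)%nat).
  apply prodL_perm.
  apply NoDup_Permutation_bis.
  - apply NoDup_map_NoDup_ForallPairs; [|apply seq_NoDup].
    intros a b Ha Hb E. apply in_seq in Ha; apply in_seq in Hb.
    eapply mod_inj; eauto; lia.
  - rewrite length_map; lia.
  - intros y Hy. apply in_map_iff in Hy. destruct Hy as [j [<- _]].
    apply in_seq. split; [lia|]. simpl. apply Nat.mod_upper_bound; lia.
Qed.

Lemma g_per (g : R -> R) (hg : forall x, g (x + PI) = g x) t y :
  g (y + INR t * PI) = g y.
Proof.
  induction t.
  - simpl; f_equal; ring.
  - rewrite S_INR. replace (y + (INR t + 1) * PI) with ((y + INR t * PI) + PI) by ring.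
    rewrite hg; auto.
Qed.

Theorem lemma4p1 (g : R -> R) (m n p q r : nat)
  (hg : forall x, g (x + PI) = g x)
  (hm : (0 < m)%nat) (hn : (0 < n)%nat)
  (hp : p = Nat.gcd m n) (hq : (0 < q)%nat) (hr : (0 < r)%nat)
  (hmq : m = (p * q)%nat) (hnr : n = (p * r)%nat) :
  let mu := PI / INR n in
  let h := fun x => prod_R (fun j => g (x + INR j * INR m * mu)) r in
  forall x : R,
    prod_R (fun k => h (x + INR k * mu)) p = prod_R (fun i => g (x + INR i * mu)) n
    /\ prod_R (fun i => g (x + INR m * INR i * mu)) n = h x ^ p.
Proof.
  intros mu h x.
  set (G := fun i : nat => g (x + INR i * mu)).
  assert (Hn0 : INR n <> 0) by (apply not_0_INR; lia).
  assert (GP : forall i t, G (i + n * t)%nat = G i).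
  { intros i t. unfold G. rewrite plus_INR, mult_INR.
    replace (x + (INR i + INR n * INR t) * mu) with ((x + INR i * mu) + INR t * PI)
      by (unfold mu; field; auto).
    apply g_per; auto. }
  assert (Hp0 : (0 < p)%nat) by (destruct p; lia).
  split.
  - assert (Hqr : Nat.gcd q r = 1%nat).
    { rewrite hmq, hnr, Nat.gcd_mul_mono_l in hp.
      destruct (Nat.gcd q r) as [|[|k]]; nia. }
    transitivity (prod_R (fun k => prod_R (fun j => G (k + p * j)%nat) r) p);
      [| rewrite swap_lemma, hnr; reflexivity].
    apply prod_R_ext; intros k _.
    rewrite <- (perm_lemma (fun j => G (k + p * j)%nat) q r Hqr hr).
    unfold h. apply prod_R_ext; intros j _.
    pose proof (Nat.div_mod_eq (j * q) r) as E.
    assert (Ek : (k + p * ((j * q) mod r) + n * (j * q / r) = k + j * m)%nat).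
    { rewrite hmq, hnr. revert E. generalize (j*q/r)%nat ((j*q) mod r)%nat. intros; nia. }
    rewrite <- GP with (t := (j * q / r)%nat), Ek. unfold G.
    rewrite plus_INR, mult_INR. f_equal; ring.
  - transitivity (prod_R (fun i => G (m * i)%nat) (r * p)).
    { replace (r*p)%nat with n by lia. apply prod_R_ext; intros; unfold G.
      rewrite mult_INR; f_equal; ring. }
    rewrite <- swap_lemma.
    transitivity (prod_R (fun j => G (m * j)%nat ^ p) r).
    { apply prod_R_ext; intros j _. rewrite <- prod_R_const.
      apply prod_R_ext; intros k _.
      replace (m * (j + r * k))%nat with (m * j + n * (q * k))%nat
        by (rewrite hmq, hnr; ring).
      apply GP. }
    rewrite prod_R_pow. f_equal. unfold h. apply prod_R_ext; intros; unfold G.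
    rewrite mult_INR; f_equal; ring.
Qed.
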